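(* Let $\mathcal{G}=(G,\lambda)$ be a simple temporal clique, $G=(V,E)$, let $\mathcal{T}^-=(V,E^-_T)$ be obtained by the forward construction and $\mathcal{T}^+=(V,E^+_T)$ by the backward construction, let $X^-$ be the set of emitters and $X^+$ the set of collectors, and let $E_H=\{\{u,v\}\in E: u\in X^-, v\in X^+\}$. Then the bidirectional fireworks cover $S=\{\{u,v\}:(u,v)\in E^-_T\cup E^+_T\}\cup E_H$ is a temporal spanner of $\mathcal{G}$.
   Context: A simple temporal clique is a pair $\mathcal{G}=(G,\lambda)$ where $G=(V,E)$ is the complete graph on a finite vertex set $V$ and $\lambda:E\to\mathbb{N}$ assigns to each edge a single integer label such that any two distinct edges sharing an endpoint have different labels; the label of an arc $(x,y)$ is $\lambda(\{x,y\})$. A journey from $x$ to $y$ is a sequence of vertices $x=u_0,\dots,u_k=y$ ($k\ge1$) with $\lambda(\{u_{i-1},u_i\})<\lambda(\{u_i,u_{i+1}\})$ for $1\le i<k$. A set $E'\subseteq E$ is a temporal spanner of $\mathcal{G}$ if for every ordered pair of distinct vertices $x,y$ there is a journey from $x$ to $y$ using only edges of $E'$. For a vertex $v$, $e^-(v)$ (resp. $e^+(v)$) is the edge incident to $v$ with smallest (resp. largest) label. Forward construction: let $E^-$ be the set of arcs $(u,v)$ with $\{u,v\}=e^-(v)$, except that if $e^-(u)=e^-(v)=\{u,v\}$ only one of $(u,v),(v,u)$ is included (arbitrarily). Initialize $E^-_T:=E^-$; for every vertex $v$ of out-degree at least $2$ in $(V,E^-)$, with out-arcs $(v,u_1),\dots,(v,u_\ell)$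 where $(v,u_\ell)$ has the largest label, for each $i<\ell$: if $u_i$ has out-degree $0$ in $(V,E^-)$ replace $(v,u_i)$ by $(u_i,v)$ in $E^-_T$, otherwise remove $(v,u_i)$ from $E^-_T$. Emitters are vertices of out-degree $0$ in $(V,E^-_T)$. Backward construction: let $E^+$ be the set of arcs $(v,u)$ with $\{u,v\}=e^+(v)$, except that if $e^+(u)=e^+(v)=\{u,v\}$ only one of $(u,v),(v,u)$ is included (arbitrarily). Initialize $E^+_T:=E^+$; for every vertex $v$ of in-degree at least $2$ in $(V,E^+)$, with in-arcs $(u_1,v),\dots,(u_\ell,v)$ where $(u_\ell,v)$ has the smallest label, for each $i<\ell$: if $u_i$ has in-degree $0$ in $(V,E^+)$ replace $(u_i,v)$ by $(v,u_i)$ in $E^+_T$, otherwise remove $(u_i,v)$ from $E^+_T$. Collectors are vertices of in-degree $0$ in $(V,E^+_T)$. *)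

(* Defs.v *)
From mathcomp Require Import all_boot.
Set Implicit Arguments. Unset Strict Implicit. Unset Printing Implicit Defensive.

Section TemporalClique.
Variable T : finType.
(* lam x y = label of the edge {x,y} of the complete graph on T (x != y). *)
Variable lam : T -> T -> nat.

Definition simple_temporal_clique : Prop :=
  (forall x y, lam x y = lam y x) /\
  (forall x y z, x != y -> x != z -> y != z -> lam x y != lam x z).

Definition is_emin (v u : T) : bool :=
  (u != v) && [forall w, (w != v) ==> (lam v u <= lam v w)].
Definition is_emax (v u : T) : bool :=
  (u != v) && [forall w, (w != v) ==> (lam v w <= lam v u)].

(* pick u v decides which of the two arcs is kept for a mutual pair *)
Variable pickm : T -> T -> bool.
Definition Em (u v : T) : bool := is_emin v u && (is_emin u v ==> pickm u v).
Definition outdegm (v : T) : nat := #|[set w | Em v w]|.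
Definition is_max_out (v u : T) : bool :=
  Em v u && [forall w, Em v w ==> (lam v w <= lam v u)].
Definition Em_removed : {set T * T} :=
  [set a | Em a.1 a.2 && (2 <= outdegm a.1) && ~~ is_max_out a.1 a.2].
Definition Em_added : {set T * T} :=
  [set a | ((a.2, a.1) \in Em_removed) && (outdegm a.1 == 0)].
Definition EmT : {set T * T} :=
  ([set a | Em a.1 a.2] :\: Em_removed) :|: Em_added.
Definition emitter (x : T) : bool := [forall w, (x, w) \notin EmT].

Variable pickp : T -> T -> bool.
Definition Ep (v u : T) : bool := is_emax v u && (is_emax u v ==> pickp v u).
Definition indegp (v : T) : nat := #|[set u | Ep u v]|.
Definition is_min_in (v u : T) : bool :=
  Ep u v && [forall w, Ep w v ==> (lam v u <= lam v w)].
Definition Ep_removed : {set T * T} :=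
  [set a | Ep a.1 a.2 && (2 <= indegp a.2) && ~~ is_min_in a.2 a.1].
Definition Ep_added : {set T * T} :=
  [set a | ((a.2, a.1) \in Ep_removed) && (indegp a.2 == 0)].
Definition EpT : {set T * T} :=
  ([set a | Ep a.1 a.2] :\: Ep_removed) :|: Ep_added.
Definition collector (x : T) : bool := [forall w, (w, x) \notin EpT].

Definition arcS (u v : T) : bool := ((u, v) \in EmT) || ((u, v) \in EpT).
Definition EH (u v : T) : bool :=
  (u != v) && ((emitter u && collector v) || (emitter v && collector u)).
Definition fireworks_cover (u v : T) : bool := [|| arcS u v, arcS v u | EH u v].

(* E' given as a predicate on (unordered) edges: E' u v <-> {u,v} \in E'. *)
Definition journey (E' : T -> T -> bool) (x y : T) : Prop :=
  exists s : seq T,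
    [/\ s != [::],
        path (fun a b => (a != b) && E' a b) x s,
        last x s = y &
        sorted ltn (pairmap lam x s)].

Definition temporal_spanner (E' : T -> T -> bool) : Prop :=
  forall x y : T, x != y -> journey E' x y.

End TemporalClique.

(* Main.v *)
Require Import Defs.
From mathcomp Require Import all_boot.
From mathcomp Require Import zify.
Set Implicit Arguments. Unset Strict Implicit. Unset Printing Implicit Defensive.

Inductive jr (T : finType) (lam : T -> T -> nat) (R : T -> T -> bool) :
  T -> nat -> T -> nat -> Prop :=
| jr_nil x t : jr lam R x t x t
| jr_cons x w y t t' : R x w -> x != w -> t <= lam x w ->
    jr lam R w (lam x w).+1 y t' -> jr lam R x t y t'.

Lemma jr_cat (T : finType) (lam : T -> T -> nat) R x t z u y v :
  jr lam R x t z u -> jr lam R z u y v -> jr lam R x t y v.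
Proof.
elim=> [//|x' w y' t0 t1 Hr Hn Hl _ IH] H; exact: jr_cons Hr Hn Hl (IH H).
Qed.

Lemma jr_seq (T : finType) (lam : T -> T -> nat) R x t y t' :
  jr lam R x t y t' -> exists s, [/\ path (fun a b => (a != b) && R a b) x s,
     last x s = y, sorted ltn (pairmap lam x s) & all (leq t) (pairmap lam x s)].
Proof.
elim=> [x0 t0|x0 w y0 t0 t1 Hr Hn Hl _ [s [Hp Hls Hs Ha]]].
- by exists [::].
exists (w :: s); split => /=.
- by rewrite Hn Hr Hp.
- by [].
- rewrite (path_sortedE ltn_trans) Hs andbT; exact: Ha.
- rewrite Hl /=; apply: (sub_all _ Ha) => l /= Hl'.
  exact: leq_trans (leq_trans Hl (leqnSn _)) Hl'.
Qed.

Lemma jr_journey (T : finType) (lam : T -> T -> nat) R x t y t' :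
  jr lam R x t y t' -> x != y -> journey lam R x y.
Proof.
move=> /jr_seq [s [Hp Hl Hs _]] Hxy; exists s; split => //.
by case: s Hp Hl Hs => [/= _ Hl _|//]; rewrite Hl eqxx in Hxy.
Qed.

Lemma jr_weak' (T : finType) (lam : T -> T -> nat) R x t0 t y t' :
  t0 <= t -> jr lam R x t y t' -> exists t'', jr lam R x t0 y t''.
Proof.
move=> Ht H; case: H Ht => [x1 t1|x1 w y1 t1 t2 Hr Hn Hl H] Ht.
- by exists t0; apply: jr_nil.
exists t2; exact: jr_cons Hr Hn (leq_trans Ht Hl) H.
Qed.

Lemma jr_weak (T : finType) (lam : T -> T -> nat) R x t0 t y t' :
  t0 <= t -> jr lam R x t y t' -> x != y -> journey lam R x y.
Proof.
move=> Ht H Hxy; case: H Ht Hxy => [x1 t1|x1 w y1 t1 t2 Hr Hn Hl H] Ht Hxy.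
- by rewrite eqxx in Hxy.
apply: (@jr_journey _ _ _ _ t0 _ t2) => //.
apply: jr_cons Hr Hn (leq_trans Ht Hl) H.
Qed.

Lemma inEmT (T : finType) (lam : T -> T -> nat) pickm u v :
  ((u, v) \in EmT lam pickm) =
  (Em lam pickm u v && ((u, v) \notin Em_removed lam pickm))
  || (((v, u) \in Em_removed lam pickm) && (outdegm lam pickm u == 0)).
Proof. by rewrite /EmT !inE /=; congr (_ || _); exact: andbC. Qed.

Lemma inEmr (T : finType) (lam : T -> T -> nat) pickm u v :
  ((u, v) \in Em_removed lam pickm) =
  [&& Em lam pickm u v, 2 <= outdegm lam pickm u & ~~ is_max_out lam pickm u v].
Proof. by rewrite /Em_removed inE /= andbA. Qed.

Lemma Em_neq (T : finType) (lam : T -> T -> nat) pickm u v :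
  Em lam pickm u v -> u != v.
Proof. by case/andP => /andP[]. Qed.

Lemma EmT_neq (T : finType) (lam : T -> T -> nat) pickm u v :
  (u, v) \in EmT lam pickm -> u != v.
Proof.
rewrite inEmT => /orP[/andP[/Em_neq //]|].
by rewrite inEmr => /andP[/and3P[/Em_neq]]; rewrite eq_sym.
Qed.

Lemma exists_max_out (T : finType) (lam : T -> T -> nat) pickm v u :
  Em lam pickm v u -> exists w, is_max_out lam pickm v w.
Proof.
move=> Hu; case: (arg_maxnP (fun w => lam v w) Hu) => w Hw Hmax.
exists w; rewrite /is_max_out Hw /=; apply/forallP => w'; apply/implyP.
exact: Hmax.
Qed.

Lemma max_out_kept (T : finType) (lam : T -> T -> nat) pickm v w :
  is_max_out lam pickm v w -> (v, w) \in EmT lam pickm.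
Proof.
move=> H; rewrite inEmT inEmr (andP H).1 H /=.
by rewrite andbF.
Qed.

Lemma L_em (T : finType) (lam : T -> T -> nat) pickm u e :
  (u, e) \in EmT lam pickm -> emitter lam pickm e -> is_emin lam e u.
Proof.
rewrite inEmT => /orP[/andP[/andP[] //]|].
rewrite inEmr => /andP[/and3P[Hem _ _] _] /forallP Hemit.
case: (exists_max_out Hem) => w /max_out_kept Hw.
by move: (Hemit w); rewrite Hw.
Qed.

Lemma S_em (T : finType) (lam : T -> T -> nat) pickm p z w :
  simple_temporal_clique lam ->
  (forall u v : T, u != v -> pickm u v = ~~ pickm v u) ->
  (p, z) \in EmT lam pickm -> (z, w) \in EmT lam pickm -> lam p z < lam z w.
Proof.
move=> [Hsym Hdist] Hanti.
rewrite (inEmT _ _ p z) => /orP[/andP[Hpz Hnr]|/andP[Hr H0]] Hzw.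
- have Hzw' := Hzw; have Hnzw := EmT_neq Hzw.
  have Hwp : w != p.
    apply/eqP => Ewp; subst w.
    move: Hzw; rewrite inEmT => /orP[/andP[Hzp _]|/andP[Hr _]].
    + have Hnp := Em_neq Hpz.
      move: Hpz Hzp; rewrite /Em => /andP[Hp1 Hp2] /andP[Hz1 Hz2].
      move: (implyP Hp2 Hz1) (implyP Hz2 Hp1); rewrite Hanti //.
      by move=> /negP.
    + by rewrite Hr in Hnr.
  move: Hpz => /andP[/andP[Hnpz /forallP /(_ w)]].
  rewrite eq_sym Hnzw /= => Hle _.
  rewrite Hsym ltn_neqAle Hle andbT.
  by apply: Hdist; rewrite // eq_sym.
- move: Hr; rewrite inEmr => /and3P[Hzp H2 Hnm].
  move: Hzw; rewrite inEmT => /orP[/andP[Hzw Hnr]|/andP[_ Hz0]]; last first.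
    by rewrite (eqP Hz0) in H2.
  have Hmax : is_max_out lam pickm z w.
    by move: Hnr; rewrite inEmr Hzw H2 /= negbK.
  have Hwp : p != w by apply: contraNneq Hnm => ->.
  move: (Hmax) => /andP[_ /forallP /(_ p)]; rewrite Hzp /= => Hle.
  rewrite Hsym ltn_neqAle Hle andbT.
  exact: Hdist (Em_neq Hzp) (Em_neq Hzw) Hwp.
Qed.

Lemma inEpT (T : finType) (lam : T -> T -> nat) pickp u v :
  ((u, v) \in EpT lam pickp) =
  (Ep lam pickp u v && ((u, v) \notin Ep_removed lam pickp))
  || (((v, u) \in Ep_removed lam pickp) && (indegp lam pickp v == 0)).
Proof. by rewrite /EpT !inE /=; congr (_ || _); exact: andbC. Qed.

Lemma inEpr (T : finType) (lam : T -> T -> nat) pickp u v :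
  ((u, v) \in Ep_removed lam pickp) =
  [&& Ep lam pickp u v, 2 <= indegp lam pickp v & ~~ is_min_in lam pickp v u].
Proof. by rewrite /Ep_removed inE /= andbA. Qed.

Lemma Ep_neq (T : finType) (lam : T -> T -> nat) pickp u v :
  Ep lam pickp u v -> u != v.
Proof. by case/andP => /andP[]; rewrite eq_sym. Qed.

Lemma EpT_neq (T : finType) (lam : T -> T -> nat) pickp u v :
  (u, v) \in EpT lam pickp -> u != v.
Proof.
rewrite inEpT => /orP[/andP[/Ep_neq //]|].
by rewrite inEpr => /andP[/and3P[/Ep_neq]]; rewrite eq_sym.
Qed.

Lemma exists_min_in (T : finType) (lam : T -> T -> nat) pickp v u :
  Ep lam pickp u v -> exists w, is_min_in lam pickp v w.
Proof.
move=> Hu; case: (arg_minnP (fun w => lam v w) (P := fun w => Ep lam pickp w v) Hu) => w Hw Hmin.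
exists w; rewrite /is_min_in Hw /=; apply/forallP => w'; apply/implyP.
exact: Hmin.
Qed.

Lemma min_in_kept (T : finType) (lam : T -> T -> nat) pickp v w :
  is_min_in lam pickp v w -> (w, v) \in EpT lam pickp.
Proof.
move=> H; rewrite inEpT inEpr (andP H).1 H /=.
by rewrite andbF.
Qed.

Lemma L_ep (T : finType) (lam : T -> T -> nat) pickp c q :
  (c, q) \in EpT lam pickp -> collector lam pickp c -> is_emax lam c q.
Proof.
rewrite inEpT => /orP[/andP[/andP[] //]|].
rewrite inEpr => /andP[/and3P[Hem _ _] _] /forallP Hcol.
case: (exists_min_in Hem) => w /min_in_kept Hw.
by move: (Hcol w); rewrite Hw.
Qed.

Lemma S_ep (T : finType) (lam : T -> T -> nat) pickp u z w :
  simple_temporal_clique lam ->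
  (forall u v : T, u != v -> pickp u v = ~~ pickp v u) ->
  (u, z) \in EpT lam pickp -> (z, w) \in EpT lam pickp -> lam u z < lam z w.
Proof.
move=> [Hsym Hdist] Hanti Huz.
rewrite (inEpT _ _ z w) => /orP[/andP[Hzw Hnr]|/andP[Hr H0]].
- have Hnuz := EpT_neq Huz.
  have Huw : u != w.
    apply/eqP => Euw; subst u.
    move: Huz; rewrite inEpT => /orP[/andP[Hwz _]|/andP[Hr _]].
    + have Hnp := Ep_neq Hzw.
      move: Hzw Hwz; rewrite /Ep => /andP[Hp1 Hp2] /andP[Hz1 Hz2].
      move: (implyP Hp2 Hz1) (implyP Hz2 Hp1); rewrite Hanti //.
      by move=> /negP.
    + by rewrite Hr in Hnr.
  move: Hzw => /andP[/andP[Hnzw /forallP /(_ u)]].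
  rewrite Hnuz /= => Hle _.
  rewrite Hsym ltn_neqAle Hle andbT.
  by apply: Hdist Huw; rewrite eq_sym.
- move: Hr; rewrite inEpr => /and3P[Hwz H2 Hnm].
  move: Huz; rewrite inEpT => /orP[/andP[Huz Hnr]|/andP[_ Hz0]]; last first.
    by rewrite (eqP Hz0) in H2.
  have Hmin : is_min_in lam pickp z u.
    by move: Hnr; rewrite inEpr Huz H2 /= negbK.
  have Huw : u != w by apply: contraNneq Hnm => <-.
  move: (Hmin) => /andP[_ /forallP /(_ w)]; rewrite Hwz /= => Hle.
  rewrite Hsym ltn_neqAle Hle andbT.
  by apply: Hdist Huw; rewrite eq_sym; [apply: Ep_neq Huz|apply: Ep_neq Hwz].
Qed.

Lemma EmT_cover (T : finType) (lam : T -> T -> nat) pickm pickp u v :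
  (u, v) \in EmT lam pickm -> fireworks_cover lam pickm pickp u v.
Proof. by move=> H; rewrite /fireworks_cover /arcS H. Qed.

Lemma EpT_cover (T : finType) (lam : T -> T -> nat) pickm pickp u v :
  (u, v) \in EpT lam pickp -> fireworks_cover lam pickm pickp u v.
Proof. by move=> H; rewrite /fireworks_cover /arcS H orbT. Qed.

Lemma EH_cover (T : finType) (lam : T -> T -> nat) pickm pickp u v :
  u != v -> emitter lam pickm u -> collector lam pickp v ->
  fireworks_cover lam pickm pickp u v.
Proof. by move=> H1 H2 H3; rewrite /fireworks_cover /EH H1 H2 H3 !orbT. Qed.

Lemma fwd_aux (T : finType) (lam : T -> T -> nat) pickm pickp :
  simple_temporal_clique lam ->
  (forall u v : T, u != v -> pickm u v = ~~ pickm v u) ->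
  forall n x p z t, (\max_(a : T * T) lam a.1 a.2) - lam p z < n ->
  (p, z) \in EmT lam pickm ->
  jr lam (fireworks_cover lam pickm pickp) x 0 p t -> t <= lam p z ->
  exists e p' t', [/\ emitter lam pickm e,
     jr lam (fireworks_cover lam pickm pickp) x 0 p' t',
     (p', e) \in EmT lam pickm, t' <= lam p' e & is_emin lam e p'].
Proof.
move=> Hc Hanti; elim=> [//|n IH] x p z t Hn Hpz Hj Ht.
case Hez: (emitter lam pickm z).
  by exists z, p, t; split => //; apply: L_em Hpz Hez.
move/negbT: Hez; rewrite /emitter negb_forall => /existsP [w]; rewrite negbK => Hzw.
have Hlt := S_em Hc Hanti Hpz Hzw.
have Hb : lam z w <= \max_(a : T * T) lam a.1 a.2 := @leq_bigmax _ (fun a : T * T => lam a.1 a.2) (z, w).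
apply: (IH x z w (lam p z).+1) => //.
- move: Hb Hn Hlt; set N := \max_(a : T * T) _; lia.
- apply: jr_cat Hj _; apply: jr_cons (EmT_cover pickp Hpz) (EmT_neq Hpz) Ht (jr_nil _ _ _ _).
Qed.

Lemma fwd (T : finType) (lam : T -> T -> nat) pickm pickp :
  simple_temporal_clique lam ->
  (forall u v : T, u != v -> pickm u v = ~~ pickm v u) ->
  forall x, exists e, emitter lam pickm e /\ (x = e \/ exists p t,
     [/\ jr lam (fireworks_cover lam pickm pickp) x 0 p t,
     (p, e) \in EmT lam pickm, t <= lam p e & is_emin lam e p]).
Proof.
move=> Hc Hanti x.
case Hex: (emitter lam pickm x); first by exists x; split => //; left.
move/negbT: Hex; rewrite /emitter negb_forall => /existsP [w]; rewrite negbK => Hxw.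
have [e [p [t [He Hj Hpe Ht Hm]]]] :=
  @fwd_aux _ _ _ pickp Hc Hanti _ x x w 0 (ltnSn _) Hxw (jr_nil _ _ _ _) (leq0n _).
by exists e; split => //; right; exists p, t.
Qed.

Lemma bwd_aux (T : finType) (lam : T -> T -> nat) pickm pickp :
  simple_temporal_clique lam ->
  (forall u v : T, u != v -> pickp u v = ~~ pickp v u) ->
  forall n z w y t, lam z w < n -> (z, w) \in EpT lam pickp ->
  jr lam (fireworks_cover lam pickm pickp) w (lam z w).+1 y t ->
  exists c q t', [/\ collector lam pickp c, (c, q) \in EpT lam pickp,
     is_emax lam c q & jr lam (fireworks_cover lam pickm pickp) q (lam c q).+1 y t'].
Proof.
move=> Hc Hanti; elim=> [//|n IH] z w y t Hn Hzw Hj.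
case Hcz: (collector lam pickp z).
  by exists z, w, t; split => //; apply: L_ep Hzw Hcz.
move/negbT: Hcz; rewrite /collector negb_forall => /existsP [u]; rewrite negbK => Huz.
have Hlt := S_ep Hc Hanti Huz Hzw.
apply: (IH u z y t) => //.
- exact: leq_trans Hlt Hn.
- exact: jr_cons (EpT_cover pickm Hzw) (EpT_neq Hzw) Hlt Hj.
Qed.

Lemma bwd (T : finType) (lam : T -> T -> nat) pickm pickp :
  simple_temporal_clique lam ->
  (forall u v : T, u != v -> pickp u v = ~~ pickp v u) ->
  forall y, exists c, collector lam pickp c /\ (y = c \/ exists q t,
     [/\ (c, q) \in EpT lam pickp, is_emax lam c q &
         jr lam (fireworks_cover lam pickm pickp) q (lam c q).+1 y t]).
Proof.
move=> Hc Hanti y.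
case Hcy: (collector lam pickp y); first by exists y; split => //; left.
move/negbT: Hcy; rewrite /collector negb_forall => /existsP [u]; rewrite negbK => Huy.
have [c [q [t [Hcc Hcq Hm Hj]]]] :=
  @bwd_aux _ _ pickm _ Hc Hanti _ u y y _ (ltnSn _) Huy (jr_nil _ _ _ _).
by exists c; split => //; right; exists q, t.
Qed.

Lemma emin_lt (T : finType) (lam : T -> T -> nat) e p q :
  simple_temporal_clique lam ->
  is_emin lam e p -> q != e -> q != p -> lam e p < lam e q.
Proof.
move=> [_ Hdist] /andP[Hpe /forallP Hall] Hqe Hqp; move: (Hall q); rewrite Hqe /= => Hle.
rewrite ltn_neqAle Hle andbT; apply: Hdist => //; by rewrite eq_sym.
Qed.

Lemma emax_lt (T : finType) (lam : T -> T -> nat) c q u :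
  simple_temporal_clique lam ->
  is_emax lam c q -> u != c -> u != q -> lam c u < lam c q.
Proof.
move=> [_ Hdist] /andP[Hqc /forallP Hall] Huc Huq; move: (Hall u); rewrite Huc /= => Hle.
rewrite ltn_neqAle Hle andbT; apply: Hdist => //; by rewrite eq_sym.
Qed.

Theorem theorem6 (T : finType) (lam : T -> T -> nat)
  (pickm pickp : T -> T -> bool) :
  simple_temporal_clique lam ->
  (forall u v : T, u != v -> pickm u v = ~~ pickm v u) ->
  (forall u v : T, u != v -> pickp u v = ~~ pickp v u) ->
  temporal_spanner lam (fireworks_cover lam pickm pickp).
Proof.
move=> Hc Hm Hp x y Hxy.
have Hsym := Hc.1.
have [e [He Px]] := @fwd _ _ _ pickp Hc Hm x.
have [c [Hcc Qy]] := @bwd _ _ pickm _ Hc Hp y.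
set R := fireworks_cover lam pickm pickp.
have cm u v : (u, v) \in EmT lam pickm -> R u v := @EmT_cover _ _ _ pickp u v.
have cp u v : (u, v) \in EpT lam pickp -> R u v := @EpT_cover _ _ pickm _ u v.
case: (eqVneq e c) => [Eec|Nec].
- subst c.
  case: Px => [Exe|[p [t [HP Hpe Ht Hmin]]]]; case: Qy => [Eye|[q [t2 [Heq Hmax HQ]]]].
  + by subst; rewrite eqxx in Hxy.
  + subst x; apply: (jr_journey (t := 0)) Hxy.
    exact: jr_cons (cp _ _ Heq) (EpT_neq Heq) (leq0n _) HQ.
  + subst y; apply: (jr_journey (t := 0)) Hxy.
    exact: jr_cat HP (jr_cons (cm _ _ Hpe) (EmT_neq Hpe) Ht (jr_nil _ _ _ _)).
  + case: (eqVneq p q) => [Epq|Npq].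
    * subst q.
      have Hle : t <= (lam e p).+1 by rewrite -Hsym; apply: leq_trans Ht (leqnSn _).
      have [t3 H3] := jr_weak' Hle HQ.
      exact: jr_journey (jr_cat HP H3) Hxy.
    * have Hqe : q != e by rewrite eq_sym; exact: EpT_neq Heq.
      have Hlt : lam p e < lam e q by rewrite Hsym; exact: emin_lt Hc Hmin Hqe (ltac:(by rewrite eq_sym)).
      apply: (jr_journey (t := 0)) Hxy.
      apply: jr_cat HP _.
      exact: jr_cons (cm _ _ Hpe) (EmT_neq Hpe) Ht (jr_cons (cp _ _ Heq) (EpT_neq Heq) Hlt HQ).
- have Hec : R e c := EH_cover Nec He Hcc.
  have Nce : c != e by rewrite eq_sym.
  case: Px => [Exe|[p [t [HP Hpe Ht Hmin]]]]; case: Qy => [Eyc|[q [t2 [Hcq Hmax HQ]]]].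
  + subst; apply: (jr_journey (t := 0)) Hxy.
    exact: jr_cons Hec Nec (leq0n _) (jr_nil _ _ _ _).
  + subst x; case: (eqVneq q e) => [Eqe|Nqe].
    * subst q; exact: jr_weak (leq0n _) HQ Hxy.
    * have Hlt : lam e c < lam c q by rewrite Hsym; exact: emax_lt Hc Hmax Nec (ltac:(by rewrite eq_sym)).
      apply: (jr_journey (t := 0)) Hxy.
      exact: jr_cons Hec Nec (leq0n _) (jr_cons (cp _ _ Hcq) (EpT_neq Hcq) Hlt HQ).
  + subst y; case: (eqVneq p c) => [Epc|Npc].
    * subst p; exact: jr_journey HP Hxy.
    * have Hlt : lam p e < lam e c by rewrite Hsym; exact: emin_lt Hc Hmin Nce (ltac:(by rewrite eq_sym)).
      apply: (jr_journey (t := 0)) Hxy; apply: jr_cat HP _.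
      exact: jr_cons (cm _ _ Hpe) (EmT_neq Hpe) Ht (jr_cons Hec Nec Hlt (jr_nil _ _ _ _)).
  + case: (eqVneq p c) => [Epc|Npc]; case: (eqVneq q e) => [Eqe|Nqe].
    * subst p q; apply: (jr_journey (t := 0)) Hxy; apply: jr_cat HP _.
      exact: jr_cons (cm _ _ Hpe) (EmT_neq Hpe) Ht HQ.
    * subst p.
      have Hlt : lam c e < lam c q by exact: emax_lt Hc Hmax Nec (ltac:(by rewrite eq_sym)).
      apply: (jr_journey (t := 0)) Hxy; apply: jr_cat HP _.
      exact: jr_cons (cp _ _ Hcq) (EpT_neq Hcq) (leq_trans Ht (ltnW Hlt)) HQ.
    * subst q.
      have Hlt : lam e p < lam e c by exact: emin_lt Hc Hmin Nce (ltac:(by rewrite eq_sym)).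
      have Hle : (lam p e).+1 <= (lam c e).+1 by rewrite ltnS Hsym (Hsym c e) ltnW.
      have [t3 H3] := jr_weak' Hle HQ.
      apply: (jr_journey (t := 0)) Hxy; apply: jr_cat HP _.
      exact: jr_cons (cm _ _ Hpe) (EmT_neq Hpe) Ht H3.
    * have Hlt1 : lam p e < lam e c by rewrite Hsym; exact: emin_lt Hc Hmin Nce (ltac:(by rewrite eq_sym)).
      have Hlt2 : lam e c < lam c q by rewrite Hsym; exact: emax_lt Hc Hmax Nec (ltac:(by rewrite eq_sym)).
      apply: (jr_journey (t := 0)) Hxy; apply: jr_cat HP _.
      apply: jr_cons (cm _ _ Hpe) (EmT_neq Hpe) Ht _.
      exact: jr_cons Hec Nec Hlt1 (jr_cons (cp _ _ Hcq) (EpT_neq Hcq) Hlt2 HQ).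
Qed.
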